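(* Let $x,y$ be real numbers with $y\neq 0$ such that either $x/y> 1$ or $x/y\le -(\sqrt2+1)^2$. Then $$\sum_{k = 1}^\infty \frac{(27xy)^k }{k(x + y)^{2k} \binom{3k}k} = \frac{\sqrt[3]{xy} }{x - y}\left(2\sqrt 3\big(\sqrt[3]{x} + \sqrt[3]{y} \big)\arctan \bigg( \frac{\sqrt 3\sqrt[3]{y}}{2\sqrt[3]{x} - \sqrt[3]{y} } \bigg)+ \big(\sqrt[3]{x} - \sqrt[3]{y} \big)\log \bigg( \frac{x + y}{\big(\sqrt[3]{x} + \sqrt[3]{y} \big)^3 } \bigg)\right).$$
   Context: $\sqrt[3]{t}$ denotes the real cube root of the real number $t$ (negative for $t<0$). *)

(* Defs.v *)
From Stdlib Require Import Reals.
From Coquelicot Require Import Coquelicot.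
Open Scope R_scope.

Definition cbrt (t : R) : R :=
  match Rlt_dec 0 t with
  | left _ => Rpower t (1/3)
  | right _ =>
    match Rlt_dec t 0 with
    | left _ => - Rpower (- t) (1/3)
    | right _ => 0
    end
  end.

(* k-th term of the series, k >= 1; Binomial.C is the real-valued binomial. *)
Definition term (x y : R) (k : nat) : R :=
  (27 * x * y) ^ k / (INR k * (x + y) ^ (2 * k) * Binomial.C (3 * k) k).

(* Main.v *)
Require Import Defs.
From Stdlib Require Import Reals Lra Lia Psatz Arith Factorial ZArith.
From Coquelicot Require Import Coquelicot.
Open Scope R_scope.

Lemma is_RInt_lin2 (f1 f2 h : R -> R) (a b c1 c2 I1 I2 : R) :
  is_RInt f1 a b I1 -> is_RInt f2 a b I2 ->
  (forall t, h t = c1 * f1 t + c2 * f2 t) ->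
  is_RInt h a b (c1 * I1 + c2 * I2).
Proof.
  intros H1 H2 He.
  apply is_RInt_ext with (fun t => plus (scal c1 (f1 t)) (scal c2 (f2 t))).
  { intros t _. rewrite He. reflexivity. }
  exact (is_RInt_plus _ _ _ _ _ _ (is_RInt_scal _ _ _ c1 _ H1) (is_RInt_scal _ _ _ c2 _ H2)).
Qed.

Lemma FTC (F f : R -> R) (a b : R) :
  (forall x, Rmin a b <= x <= Rmax a b -> is_derive F x (f x)) ->
  (forall x, Rmin a b <= x <= Rmax a b -> continuous f x) ->
  is_RInt f a b (F b - F a).
Proof. intros H1 H2. exact (is_RInt_derive F f a b H1 H2). Qed.

Ltac cont_tac := match goal with |- continuous ?f ?x => apply (ex_derive_continuous f x) end.

Definition beta (m n : nat) : R :=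
  INR (fact m) * INR (fact n) / INR (fact (m + n + 1)).

Lemma beta_int (n m : nat) :
  is_RInt (fun t => t ^ m * (1 - t) ^ n) 0 1 (beta m n).
Proof.
  revert m; induction n as [|n IH]; intros m.
  - assert (H : is_RInt (fun t => t ^ m * (1 - t) ^ 0) 0 1
       ((fun t => t ^ (S m) / INR (S m)) 1 - (fun t => t ^ (S m) / INR (S m)) 0)).
    { apply (FTC (fun t => t ^ (S m) / INR (S m))).
      - intros x _. auto_derive; [easy|].
        change (match m with 0%nat => 1 | S _ => INR m + 1 end) with (INR (S m)).
        rewrite pow_O. field. apply not_0_INR; lia.
      - intros x _. cont_tac. auto_derive. auto. }
    replace (beta m 0) with ((fun t => t ^ (S m) / INR (S m)) 1 - (fun t => t ^ (S m) / INR (S m)) 0); [exact H|].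
    unfold beta. rewrite pow1, pow_i by lia.
    replace (m + 0 + 1)%nat with (S m) by lia. rewrite fact_simpl, mult_INR.
    change (fact 0) with 1%nat. change (INR 1) with 1.
    field. split; [apply INR_fact_neq_0| apply not_0_INR; lia].
  - set (F := fun t => t ^ (S m) * (1 - t) ^ (S n)).
    assert (HF : is_RInt (fun t => INR (S m) * (t ^ m * (1 - t) ^ S n) - INR (S n) * (t ^ (S m) * (1 - t) ^ n)) 0 1 (F 1 - F 0)).
    { apply (FTC F).
      - intros x _. unfold F. auto_derive; [easy|].
        change (match m with 0%nat => 1 | S _ => INR m + 1 end) with (INR (S m)).
        change (match n with 0%nat => 1 | S _ => INR n + 1 end) with (INR (S n)).
        rewrite <- !tech_pow_Rmult. unfold Rminus. ring.
      - intros x _. cont_tac. auto_derive. auto. }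
    assert (H2 := is_RInt_lin2 _ _ (fun t => t ^ m * (1 - t) ^ S n) _ _ (/ INR (S m)) (INR (S n) / INR (S m)) _ _ HF (IH (S m))).
    replace (beta m (S n)) with (/ INR (S m) * (F 1 - F 0) + INR (S n) / INR (S m) * beta (S m) n).
    + apply H2. intros t. field. apply not_0_INR; lia.
    + unfold F, beta. rewrite Rminus_diag, !pow_i by lia.
      replace (S m + n + 1)%nat with (m + S n + 1)%nat by lia.
      rewrite !fact_simpl, !mult_INR.
      field. repeat split; try apply INR_fact_neq_0.
      apply not_0_INR; lia.
Qed.

Definition zz (x y : R) : R := 27 * x * y / (x + y) ^ 2.
Definition ww (z t : R) : R := z * t * (1 - t) ^ 2.
Definition gg (z t : R) : R := z * (1 - t) ^ 2 / (1 - ww z t).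

Lemma w01 (t : R) : 0 <= t <= 1 -> 0 <= t * (1 - t) ^ 2 <= 4 / 27.
Proof.
  intros Ht. split.
  - apply Rmult_le_pos; [lra| apply pow2_ge_0].
  - assert (E : 4/27 - t * (1 - t) ^ 2 = (t - 1/3)^2 * (4/3 - t)) by field.
    assert (0 <= (t - 1/3)^2 * (4/3 - t)) by (apply Rmult_le_pos; [apply pow2_ge_0| lra]).
    lra.
Qed.

Definition dlt (z : R) : R := Rmin 1 (1 - 4 * z / 27).

Lemma dlt_pos z : z < 27/4 -> 0 < dlt z.
Proof. intros. unfold dlt. apply Rmin_glb_lt; lra. Qed.

Lemma denom_ge z t : z < 27/4 -> 0 <= t <= 1 -> dlt z <= 1 - ww z t.
Proof.
  intros Hz Ht. destruct (w01 t Ht) as [H1 H2]. unfold ww, dlt.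
  destruct (Rle_or_lt z 0) as [Hz0|Hz0].
  - assert (z * (t * (1-t)^2) <= 0) by nra.
    apply Rle_trans with 1; [apply Rmin_l|]. nra.
  - apply Rle_trans with (1 - 4 * z / 27); [apply Rmin_r|]. nra.
Qed.

Lemma denom_pos z t : z < 27/4 -> 0 <= t <= 1 -> 0 < 1 - ww z t.
Proof. intros Hz Ht. pose proof (denom_ge z t Hz Ht). pose proof (dlt_pos z Hz). lra. Qed.

Lemma int_k z n :
  is_RInt (fun t => z * (1 - t) ^ 2 * ww z t ^ n) 0 1 (z ^ (S n) * beta n (2 * n + 2)).
Proof.
  apply is_RInt_ext with (fun t => z ^ (S n) * (t ^ n * (1 - t) ^ (2 * n + 2))).
  { intros t _. unfold ww. rewrite !Rpow_mult_distr, pow_add, pow_mult.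
    rewrite <- tech_pow_Rmult. match goal with |- ?A = ?B => change (@eq R A B) end. ring. }
  pose proof (is_RInt_scal _ _ _ (z ^ S n) _ (beta_int (2 * n + 2) n)) as H.
  exact H.
Qed.

Lemma term_eq x y n : x + y <> 0 ->
  term x y (S n) = zz x y ^ (S n) * beta n (2 * n + 2).
Proof.
  intros Hxy. unfold term, zz, beta, Binomial.C.
  replace (3 * S n - S n)%nat with (2 * n + 2)%nat by lia.
  replace (n + (2 * n + 2) + 1)%nat with (3 * S n)%nat by lia.
  rewrite fact_simpl, mult_INR.
  replace (2 * S n)%nat with (2 * S n)%nat by reflexivity.
  rewrite pow_mult.
  unfold Rdiv. rewrite (Rpow_mult_distr (27 * x * y)), pow_inv.
  field. repeat split; try apply INR_fact_neq_0; try (apply not_0_INR; lia).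
  apply pow_nonzero. apply pow_nonzero. exact Hxy.
Qed.

Ltac req := match goal with |- ?A = ?B => change (@eq R A B) end.

Lemma is_RInt_uniq (f : R -> R) a b l1 l2 : is_RInt f a b l1 -> is_RInt f a b l2 -> l1 = l2.
Proof.
  intros H1 H2. apply (is_RInt_unique (V:=R_CompleteNormedModule)) in H1. apply (is_RInt_unique (V:=R_CompleteNormedModule)) in H2. congruence.
Qed.

Lemma is_RInt_scal' (f : R -> R) a b c I : is_RInt f a b I -> is_RInt (fun t => c * f t) a b (c * I).
Proof. intros H. exact (is_RInt_scal _ _ _ c _ H). Qed.

Definition EE (z : R) (n : nat) : R := RInt (fun t => gg z t * ww z t ^ n) 0 1.

Lemma EE_is z n : z < 27/4 -> is_RInt (fun t => gg z t * ww z t ^ n) 0 1 (EE z n).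
Proof.
  intros Hz. apply (RInt_correct (V := R_CompleteNormedModule)).
  apply ex_RInt_continuous. intros t Ht.
  rewrite Rmin_left in Ht by lra. rewrite Rmax_right in Ht by lra.
  pose proof (denom_pos z t Hz Ht) as Hd.
  cont_tac. unfold gg, ww in *. auto_derive. lra.
Qed.

Lemma EE_step z n : z < 27/4 -> EE z n - EE z (S n) = z ^ (S n) * beta n (2 * n + 2).
Proof.
  intros Hz.
  pose proof (is_RInt_lin2 _ _ (fun t => 1 * (gg z t * ww z t ^ n) + -1 * (gg z t * ww z t ^ S n))
     0 1 1 (-1) _ _ (EE_is z n Hz) (EE_is z (S n) Hz) (fun t => eq_refl)) as H.
  replace (EE z n - EE z (S n)) with (1 * EE z n + -1 * EE z (S n)) by ring.
  apply (is_RInt_uniq _ _ _ _ _ H).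
  apply is_RInt_ext with (fun t => z * (1 - t) ^ 2 * ww z t ^ n); [|apply int_k].
  intros t Ht. rewrite Rmin_left in Ht by lra. rewrite Rmax_right in Ht by lra.
  assert (Hd : 0 < 1 - ww z t) by (apply denom_pos; lra).
  unfold gg. rewrite <- (tech_pow_Rmult (ww z t) n). req. field. lra.
Qed.

Definition dd (n : nat) : R := (27/4) ^ n * beta n (2 * n).

Lemma EE_bound z n : -27/4 <= z < 27/4 -> Rabs (EE z n) <= Rabs z / dlt z * dd n.
Proof.
  intros [Hz1 Hz2].
  pose proof (dlt_pos z Hz2) as Hdl.
  apply (norm_RInt_le (fun t => gg z t * ww z t ^ n)
          (fun t => (Rabs z / dlt z * (27/4)^n) * (t ^ n * (1 - t) ^ (2 * n))) 0 1).
  - lra.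
  - intros t Ht.
    change (norm ?u) with (Rabs u).
    pose proof (denom_ge z t Hz2 Ht) as Hd.
    pose proof (w01 t Ht) as [Hw1 Hw2].
    rewrite Rabs_mult, <- RPow_abs.
    assert (Hg : Rabs (gg z t) <= Rabs z / dlt z).
    { unfold gg. rewrite Rabs_div by lra. rewrite Rabs_mult.
      rewrite (Rabs_pos_eq ((1-t)^2)) by apply pow2_ge_0.
      rewrite (Rabs_pos_eq (1 - ww z t)) by lra.
      unfold Rdiv. apply Rle_trans with (Rabs z * / (1 - ww z t)).
      - rewrite Rmult_assoc. apply Rmult_le_compat_l; [apply Rabs_pos|].
        assert (0 < / (1 - ww z t)) by (apply Rinv_0_lt_compat; lra).
        assert ((1-t)^2 <= 1) by nra. nra.
      - apply Rmult_le_compat_l; [apply Rabs_pos|]. apply Rinv_le_contravar; lra. }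
    assert (Hw : Rabs (ww z t) ^ n <= (27/4)^n * (t ^ n * (1 - t) ^ (2 * n))).
    { rewrite pow_mult, <- !Rpow_mult_distr. apply pow_incr. split; [apply Rabs_pos|].
      unfold ww. rewrite Rmult_assoc, Rabs_mult, (Rabs_pos_eq (t * (1-t)^2)) by lra.
      assert (Rabs z <= 27/4) by (apply Rabs_le; lra). nra. }
    assert (0 <= Rabs (ww z t) ^ n) by (apply pow_le, Rabs_pos).
    assert (0 <= Rabs z / dlt z) by (apply Rmult_le_pos; [apply Rabs_pos| apply Rlt_le, Rinv_0_lt_compat; lra]).
    apply Rle_trans with (Rabs z / dlt z * ((27 / 4) ^ n * (t ^ n * (1 - t) ^ (2 * n)))).
    + apply Rmult_le_compat; auto; apply Rabs_pos.
    + right. ring.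
  - apply EE_is; lra.
  - unfold dd. rewrite <- Rmult_assoc. apply is_RInt_scal'. apply beta_int.
Qed.

Lemma dd_S n : dd (S n) = dd n * (9 * (INR n + 1) * (2 * INR n + 1) / (2 * (3 * INR n + 4) * (3 * INR n + 2))).
Proof.
  unfold dd, beta.
  replace (2 * S n)%nat with (S (S (2 * n))) by lia.
  replace (S n + S (S (2 * n)) + 1)%nat with (S (S (S (n + 2 * n + 1)))) by lia.
  rewrite !fact_simpl, !mult_INR, !S_INR.
  replace (INR (n + 2 * n + 1)) with (3 * INR n + 1) by (rewrite !plus_INR, mult_INR; simpl; ring).
  replace (INR (2 * n)) with (2 * INR n) by (rewrite mult_INR; simpl; ring).
  simpl pow.
  assert (0 <= INR n) by apply pos_INR.
  field. repeat split; try apply INR_fact_neq_0; lra.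
Qed.

Lemma dd_0 : dd 0 = 1.
Proof. unfold dd, beta. simpl. field. Qed.

Lemma dd_pos n : 0 <= dd n.
Proof.
  unfold dd, beta. apply Rmult_le_pos. apply pow_le; lra.
  apply Rmult_le_pos. apply Rmult_le_pos; apply pos_INR.
  apply Rlt_le, Rinv_0_lt_compat. apply INR_fact_lt_0.
Qed.

Lemma dd_cube n : dd n ^ 3 * (INR n + 1) <= 1.
Proof.
  induction n as [|n IH].
  - rewrite dd_0. simpl. lra.
  - rewrite dd_S, S_INR. set (m := INR n). set (d := dd n).
    assert (Hm : 0 <= m) by apply pos_INR.
    assert (Hd : 0 <= d) by apply dd_pos.
    set (r := 9 * (m + 1) * (2 * m + 1) / (2 * (3 * m + 4) * (3 * m + 2))).
    assert (Hr : r ^ 3 * (m + 1 + 1) <= m + 1).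
    { unfold r. unfold Rdiv. rewrite Rpow_mult_distr, pow_inv.
      apply Rmult_le_reg_r with ((2 * (3 * m + 4) * (3 * m + 2)) ^ 3).
      { apply pow_lt. nra. }
      replace ((9 * (m + 1) * (2 * m + 1)) ^ 3 * / (2 * (3 * m + 4) * (3 * m + 2)) ^ 3 * (m + 1 + 1) *
         (2 * (3 * m + 4) * (3 * m + 2)) ^ 3) with ((9 * (m + 1) * (2 * m + 1)) ^ 3 * (m + 1 + 1)).
      2: { field. nra. }
      assert (E : (m + 1) * (2 * (3 * m + 4) * (3 * m + 2)) ^ 3 - (9 * (m + 1) * (2 * m + 1)) ^ 3 * (m + 1 + 1)
        = 2638 + 17893 * m + 49005 * m^2 + 68985 * m^3 + 52245 * m^4 + 19926 * m^5 + 2916 * m^6) by ring.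
      assert (0 <= 17893 * m + 49005 * m^2 + 68985 * m^3 + 52245 * m^4 + 19926 * m^5 + 2916 * m^6).
      { assert (0 <= m^2) by (apply pow_le; lra). assert (0 <= m^3) by (apply pow_le; lra).
        assert (0 <= m^4) by (apply pow_le; lra). assert (0 <= m^5) by (apply pow_le; lra).
        assert (0 <= m^6) by (apply pow_le; lra). lra. }
      lra. }
    assert (Hr0 : 0 <= r) by (unfold r; apply Rmult_le_pos; [nra| apply Rlt_le, Rinv_0_lt_compat; nra]).
    replace ((d * r) ^ 3 * (m + 1 + 1)) with ((d ^ 3) * (r ^ 3 * (m + 1 + 1))) by ring.
    assert (0 <= d ^ 3) by (apply pow_le; lra).
    apply Rle_trans with (d ^ 3 * (m + 1)).
    + apply Rmult_le_compat_l; assumption.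
    + exact IH.
Qed.

Lemma dd_lim : is_lim_seq dd 0.
Proof.
  apply is_lim_seq_spec. intros eps.
  destruct (archimed (/ (eps * eps * eps))) as [Hup _].
  set (N := Z.to_nat (up (/ (eps * eps * eps)))).
  exists N. intros n Hn.
  rewrite Rminus_0_r, Rabs_pos_eq by apply dd_pos.
  destruct (Rlt_or_le (dd n) eps) as [H|H]; [exact H|exfalso].
  pose proof (dd_cube n) as Hc.
  pose proof (cond_pos eps) as He.
  assert (HN : / (eps * eps * eps) < INR n + 1).
  { apply Rlt_le_trans with (IZR (up (/ (eps * eps * eps)))); [exact Hup|].
    assert (0 < IZR (up (/ (eps * eps * eps)))).
    { apply Rlt_trans with (/ (eps * eps * eps)); [|exact Hup]. apply Rinv_0_lt_compat. 
      apply Rmult_lt_0_compat; [apply Rmult_lt_0_compat|]; exact He. }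
    assert (Hz : (0 < up (/ (eps * eps * eps)))%Z) by (apply lt_0_IZR; exact H0).
    assert (IZR (up (/ (eps * eps * eps))) = INR N).
    { unfold N. rewrite INR_IZR_INZ, Z2Nat.id by lia. reflexivity. }
    rewrite H1. apply le_INR in Hn. lra. }
  assert (eps ^ 3 <= dd n ^ 3) by (apply pow_incr; lra).
  assert (0 < eps ^ 3) by (apply pow_lt; exact He).
  assert (1 < eps ^ 3 * (INR n + 1)).
  { replace (eps ^ 3) with (eps * eps * eps) by ring.
    apply Rmult_lt_reg_l with (/ (eps * eps * eps)).
    { apply Rinv_0_lt_compat. simpl in H1. nra. }
    rewrite <- Rmult_assoc, Rinv_l, Rmult_1_l, Rmult_1_r. exact HN. simpl in H1. nra. }
  assert (0 <= INR n + 1) by (pose proof (pos_INR n); lra).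
  nra.
Qed.

Lemma EE_lim z : -27/4 <= z < 27/4 -> is_lim_seq (EE z) 0.
Proof.
  intros Hz. apply is_lim_seq_abs_0.
  apply is_lim_seq_le_le with (fun _ => 0) (fun n => Rabs z / dlt z * dd n).
  - intros n. split; [apply Rabs_pos| apply EE_bound; exact Hz].
  - apply is_lim_seq_const.
  - pose proof (is_lim_seq_scal_l dd (Rabs z / dlt z) 0 dd_lim) as H.
    rewrite Rbar_mult_0_r in H. exact H.
Qed.

Lemma series_part x y L : x + y <> 0 -> -27/4 <= zz x y < 27/4 ->
  is_RInt (gg (zz x y)) 0 1 L -> is_series (fun n => term x y (S n)) L.
Proof.
  intros Hxy Hz HL.
  set (z := zz x y) in *.
  assert (HL0 : L = EE z 0).
  { apply (is_RInt_uniq (gg z) 0 1); [exact HL|].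
    apply is_RInt_ext with (fun t => gg z t * ww z t ^ 0).
    - intros t _. simpl. req. ring.
    - apply EE_is; lra. }
  assert (Hs : forall N, sum_n (fun n => term x y (S n)) N = EE z 0 - EE z (S N)).
  { induction N as [|N IH].
    - rewrite sum_O. rewrite term_eq by exact Hxy. fold z. rewrite <- (EE_step z) by lra. reflexivity.
    - rewrite sum_Sn, IH. rewrite term_eq by exact Hxy. fold z. rewrite <- (EE_step z) by lra.
      unfold plus; simpl. ring. }
  assert (H : is_lim_seq (sum_n (fun n => term x y (S n))) L).
  { apply is_lim_seq_ext with (fun N => EE z 0 - EE z (S N)).
    { intros N. rewrite Hs. reflexivity. }
    replace (Finite L) with (Rbar_minus (EE z 0) 0) by (simpl; f_equal; rewrite HL0; ring).
    apply is_lim_seq_minus'. apply is_lim_seq_const.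
    apply (is_lim_seq_incr_1 (EE z) 0). apply EE_lim. exact Hz. }
  exact H.
Qed.

Lemma is_derive_eqv (f : R -> R) x d1 d2 : is_derive f x d1 -> d1 = d2 -> is_derive f x d2.
Proof. intros H ->. exact H. Qed.

Lemma atan_s_derive (f : R -> R) (s x df : R) : s * s = 3 -> is_derive f x df ->
  is_derive (fun t => atan (s * f t)) x (s * df / (1 + 3 * f x ^ 2)).
Proof.
  intros hs Hf.
  assert (Ha : is_derive atan (s * f x) (/ (1 + (s * f x) ^ 2))).
  { auto_derive; auto. field. pose proof (pow2_ge_0 (s * f x)). nra. }
  assert (Hm : is_derive (fun t => s * f t) x (s * df)).
  { apply (is_derive_scal f x s df Hf). }
  pose proof (is_derive_comp atan (fun t => s * f t) x _ _ Ha Hm) as H.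
  apply (is_derive_eqv _ _ _ _ H).
  change (scal ?a ?b) with (a * b).
  replace ((s * f x) ^ 2) with (3 * f x ^ 2) by (rewrite <- hs; ring).
  req. field. pose proof (pow2_ge_0 (f x)). lra.
Qed.

Ltac nzb := match goal with H : ?a <> 0 |- ?b <> 0 => intro; apply H; lra end.
Ltac nz := repeat (match goal with
  | |- _ * _ <> 0 => apply Rmult_integral_contrapositive_currified
  | |- _ ^ _ <> 0 => apply pow_nonzero
  | |- / _ <> 0 => apply Rinv_neq_0_compat end); try lra; try nzb.

Definition Y1 (r : R) : R := (r + 1) / (3 * (r - 1)).
Definition Y0 (r : R) : R := (r ^ 2 - 4 * r + 1) / (3 * (r + 1) * (r - 1)).
Definition V0 (r : R) : R := / (2 * r - 1).
Definition hfun (r : R) : R :=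
  atan (sqrt 3 * Y1 r) - atan (sqrt 3 * Y0 r) - 3 * atan (sqrt 3 * V0 r).

Lemma s3 : sqrt 3 * sqrt 3 = 3.
Proof. apply sqrt_sqrt. lra. Qed.

Lemma hfun_deriv r : r - 1 <> 0 -> r + 1 <> 0 -> 2 * r - 1 <> 0 -> is_derive hfun r 0.
Proof.
  intros H1 H2 H3.
  assert (D1 : is_derive Y1 r (-2 / (3 * (r - 1) ^ 2))).
  { unfold Y1. auto_derive. nz. req. field. nz. }
  assert (D0 : is_derive Y0 r (4 * (r ^ 2 - r + 1) / (3 * ((r + 1) * (r - 1)) ^ 2))).
  { unfold Y0. auto_derive. nz. req. field. split; nz. }
  assert (DV : is_derive V0 r (-2 / (2 * r - 1) ^ 2)).
  { unfold V0. auto_derive. nz. req. field. nz. }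
  pose proof (atan_s_derive Y1 _ _ _ s3 D1) as A1.
  pose proof (atan_s_derive Y0 _ _ _ s3 D0) as A0.
  pose proof (atan_s_derive V0 _ _ _ s3 DV) as AV.
  pose proof (is_derive_scal _ _ 3 _ AV) as AV3.
  pose proof (is_derive_minus _ _ _ _ _ A1 A0) as A10.
  pose proof (is_derive_minus _ _ _ _ _ A10 AV3) as A.
  apply (is_derive_eqv _ _ _ _ A).
  change (minus ?a ?b) with (a - b). change (scal ?a ?b) with (a * b).
  unfold Y1, Y0, V0. repeat change (minus ?a ?b) with (a - b). req.
  field. repeat split; try lra.
  all: try (intro; apply H2; nra).
Qed.

Lemma hfun_const r r0 : (forall u, Rmin r0 r <= u <= Rmax r0 r -> (1 < u \/ u < -1)) -> hfun r = hfun r0.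
Proof.
  intros Hd.
  assert (Hder : forall u, Rmin r0 r <= u <= Rmax r0 r -> is_derive hfun u 0).
  { intros u Hu. destruct (Hd u Hu) as [Hu1|Hu1]; apply hfun_deriv; lra. }
  destruct (MVT_gen hfun r0 r (fun _ => 0)) as [c [_ Hc]].
  - intros u Hu. apply Hder. lra.
  - intros u Hu. apply continuity_pt_filterlim. apply (ex_derive_continuous hfun u).
    exists 0. apply Hder. exact Hu.
  - lra.
Qed.

Lemma s3_pos : 0 < sqrt 3.
Proof. apply sqrt_lt_R0. lra. Qed.

Lemma hfun_2 : hfun 2 = 0.
Proof.
  pose proof s3 as hs. pose proof s3_pos as hp. pose proof PI_RGT_0 as Hpi.
  unfold hfun, Y1, Y0, V0.
  replace (sqrt 3 * ((2 + 1) / (3 * (2 - 1)))) with (tan (PI / 3)) by (rewrite tan_PI3; field).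
  replace (sqrt 3 * ((2 ^ 2 - 4 * 2 + 1) / (3 * (2 + 1) * (2 - 1)))) with (- tan (PI / 6))
    by (rewrite tan_PI6; field_simplify_eq; [nra| lra]).
  replace (sqrt 3 * / (2 * 2 - 1)) with (tan (PI / 6))
    by (rewrite tan_PI6; field_simplify_eq; [nra| lra]).
  rewrite atan_opp, !atan_tan; lra.
Qed.

Lemma tan_PI12 : tan (PI / 3 - PI / 4) = 2 - sqrt 3.
Proof.
  pose proof s3 as hs. pose proof s3_pos as hp. pose proof PI_RGT_0 as Hpi.
  rewrite tan_minus, tan_PI3, tan_PI4.
  - field_simplify_eq; [nra| lra].
  - rewrite cos_PI3. lra.
  - rewrite cos_PI4. apply Rgt_not_eq, Rlt_gt. unfold Rdiv. rewrite Rmult_1_l. apply Rinv_0_lt_compat, sqrt_lt_R0. lra.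
  - apply Rgt_not_eq, Rlt_gt, cos_gt_0; lra.
  - rewrite tan_PI3, tan_PI4. lra.
Qed.

Lemma hfun_r0 : hfun (- (1 + sqrt 3)) = 0.
Proof.
  pose proof s3 as hs. pose proof s3_pos as hp. pose proof PI_RGT_0 as Hpi.
  unfold hfun, Y1, Y0, V0.
  replace (sqrt 3 * ((- (1 + sqrt 3) + 1) / (3 * (- (1 + sqrt 3) - 1)))) with (tan (PI / 3 - PI / 4))
    by (rewrite tan_PI12; field_simplify_eq; [nra| lra]).
  replace (sqrt 3 * (((- (1 + sqrt 3)) ^ 2 - 4 * (- (1 + sqrt 3)) + 1) / (3 * (- (1 + sqrt 3) + 1) * (- (1 + sqrt 3) - 1))))
    with (tan (PI / 3)).
  2: { rewrite tan_PI3. field_simplify_eq. nra. split; [lra|]. intro. nra. }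
  replace (sqrt 3 * / (2 * - (1 + sqrt 3) - 1)) with (- tan (PI / 3 - PI / 4))
    by (rewrite tan_PI12; field_simplify_eq; [nra| lra]).
  rewrite atan_opp, !atan_tan; lra.
Qed.

Lemma triple r : 1 < r \/ r < -1 ->
  atan (sqrt 3 * Y1 r) - atan (sqrt 3 * Y0 r) = 3 * atan (sqrt 3 * V0 r).
Proof.
  intros Hr. pose proof s3_pos as hp.
  assert (H : hfun r = 0).
  { destruct Hr as [Hr|Hr].
    - rewrite <- hfun_2. apply hfun_const. intros u Hu. left.
      assert (1 < Rmin 2 r) by (apply Rmin_glb_lt; lra). lra.
    - rewrite <- hfun_r0. apply hfun_const. intros u Hu. right.
      assert (Rmax (- (1 + sqrt 3)) r < -1) by (apply Rmax_lub_lt; lra). lra. }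
  unfold hfun in H. lra.
Qed.

Definition mm (r : R) : R := r ^ 2 - r + 1.
Definition nn (r : R) : R := r ^ 2 + r + 1.
Definition Q2 (r t : R) : R := 9 * r ^ 2 * t ^ 2 + 3 * r * (r ^ 2 - 4 * r + 1) * t + mm r ^ 2.
Definition Yt (r t : R) : R := (6 * r * t + r ^ 2 - 4 * r + 1) / (3 * (r + 1) * (r - 1)).
Definition Kc (r : R) : R := 2 * r * (r + 1) / (sqrt 3 * (r - 1) * nn r).
Definition Lp (r t : R) : R :=
  - (mm r / (6 * nn r)) * ln ((3 * r * t - (r + 1) ^ 2) ^ 2)
  - ((r + 1) ^ 2 / (3 * nn r)) * ln (Q2 r t).
Definition GG (r t : R) : R := Lp r t + Kc r * atan (sqrt 3 * Yt r t).
Definition zr (r : R) : R := 27 * r ^ 3 / (1 + r ^ 3) ^ 2.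

Lemma sq_pos x : x <> 0 -> 0 < x ^ 2.
Proof. intros H. replace (x ^ 2) with (Rsqr x) by (unfold Rsqr; ring). apply Rsqr_pos_lt, H. Qed.

Lemma nn_pos r : 0 < nn r.
Proof. unfold nn. nra. Qed.
Lemma mm_pos r : 0 < mm r.
Proof. unfold mm. nra. Qed.

Lemma Q2_pos r t : r + 1 <> 0 -> r - 1 <> 0 -> 0 < Q2 r t.
Proof.
  intros H1 H2. unfold Q2, mm.
  assert (E : 9 * r ^ 2 * t ^ 2 + 3 * r * (r ^ 2 - 4 * r + 1) * t + (r ^ 2 - r + 1) ^ 2
     = (3 * r * t + (r ^ 2 - 4 * r + 1) / 2) ^ 2 + 3 / 4 * ((r + 1) * (r - 1)) ^ 2) by field.
  rewrite E.
  assert (0 < ((r + 1) * (r - 1)) ^ 2).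
  { apply sq_pos. nz. }
  pose proof (pow2_ge_0 (3 * r * t + (r ^ 2 - 4 * r + 1) / 2)). lra.
Qed.

Lemma lin_neg r t : (1 < r \/ r < -1) -> 0 <= t <= 1 -> 3 * r * t - (r + 1) ^ 2 < 0.
Proof. intros [H|H] Ht; nra. Qed.

Lemma zr_lt r : (1 < r \/ r < -1) -> zr r < 27 / 4.
Proof.
  intros Hr. unfold zr.
  assert (H3 : 1 + r ^ 3 <> 0) by (destruct Hr; nra).
  assert (H4 : 0 < (1 + r ^ 3) ^ 2) by (apply sq_pos, H3).
  assert (E : 27 * r ^ 3 / (1 + r ^ 3) ^ 2 = 27 / 4 - 27 / 4 * ((1 - r ^ 3) ^ 2 / (1 + r ^ 3) ^ 2))
    by (field; exact H3).
  rewrite E.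
  assert (0 < (1 - r ^ 3) ^ 2 / (1 + r ^ 3) ^ 2).
  { apply Rdiv_lt_0_compat; [|exact H4]. apply sq_pos. destruct Hr; nra. }
  lra.
Qed.

Lemma GG_deriv r t : (1 < r \/ r < -1) -> 0 <= t <= 1 -> is_derive (GG r) t (gg (zr r) t).
Proof.
  intros Hr Ht.
  assert (H1 : r - 1 <> 0) by (destruct Hr; lra).
  assert (H2 : r + 1 <> 0) by (destruct Hr; lra).
  assert (H0 : r <> 0) by (destruct Hr; lra).
  assert (H3 : 1 + r ^ 3 <> 0) by (destruct Hr; nra).
  pose proof (nn_pos r) as Hn. pose proof (mm_pos r) as Hm.
  pose proof (Q2_pos r t H2 H1) as HQ.
  pose proof (lin_neg r t Hr Ht) as HL.
  pose proof s3_pos as Hs.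
  pose proof (denom_pos (zr r) t (zr_lt r Hr) Ht) as HD.
  assert (HD2 : 0 < (1 + r ^ 3) ^ 2 - 27 * r ^ 3 * t * (1 - t) ^ 2).
  { assert (E : (1 + r ^ 3) ^ 2 - 27 * r ^ 3 * t * (1 - t) ^ 2 = (1 + r ^ 3) ^ 2 * (1 - ww (zr r) t))
      by (unfold ww, zr; field; exact H3).
    rewrite E. apply Rmult_lt_0_compat; [apply sq_pos, H3| exact HD]. }
  assert (Hg : gg (zr r) t = 27 * r ^ 3 * (1 - t) ^ 2 / ((1 + r ^ 3) ^ 2 - 27 * r ^ 3 * t * (1 - t) ^ 2)).
  { unfold gg, ww, zr. field. split; [lra| exact H3]. }
  assert (DL : is_derive (Lp r) t
     (- (mm r / (6 * nn r)) * (2 * (3 * r) / (3 * r * t - (r + 1) ^ 2))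
      - ((r + 1) ^ 2 / (3 * nn r)) * ((18 * r ^ 2 * t + 3 * r * (r ^ 2 - 4 * r + 1)) / Q2 r t))).
  { unfold Lp. unfold Q2 in *. auto_derive.
    - split; [apply sq_pos; lra|]. split; [exact HQ| auto].
    - req. field. repeat split; lra. }
  assert (DY : is_derive (Yt r) t (6 * r / (3 * (r + 1) * (r - 1)))).
  { unfold Yt. auto_derive. nz. req. field. split; nz. }
  pose proof (atan_s_derive (Yt r) _ _ _ s3 DY) as DA.
  pose proof (is_derive_scal _ _ (Kc r) _ DA) as DA2.
  pose proof (is_derive_plus _ _ _ _ _ DL DA2) as D.
  apply (is_derive_eqv _ _ _ _ D).
  change (plus ?a ?b) with (a + b). change (scal ?a ?b) with (a * b).
  rewrite Hg. unfold Kc, Yt, Q2, mm, nn in *. req.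
  pose proof (sq_pos _ H2). pose proof (sq_pos _ H1).
  pose proof (pow2_ge_0 (6 * r * t + r ^ 2 - 4 * r + 1)).
  assert (0 < (r + 1) ^ 2 * (r - 1) ^ 2) by (apply Rmult_lt_0_compat; lra).
  field. repeat split; try lra.
Qed.

Definition CF (r : R) : R :=
  r / (r ^ 3 - 1) * (2 * sqrt 3 * (r + 1) * atan (sqrt 3 / (2 * r - 1))
    + (r - 1) * ln ((r ^ 3 + 1) / (r + 1) ^ 3)).

Lemma closed_form r : (1 < r \/ r < -1) -> is_RInt (gg (zr r)) 0 1 (CF r).
Proof.
  intros Hr.
  assert (H1 : r - 1 <> 0) by (destruct Hr; lra).
  assert (H2 : r + 1 <> 0) by (destruct Hr; lra).
  assert (H0 : r <> 0) by (destruct Hr; lra).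
  assert (H3 : 1 + r ^ 3 <> 0) by (destruct Hr; nra).
  assert (H4 : r ^ 3 - 1 <> 0) by (destruct Hr; nra).
  assert (H5 : 2 * r - 1 <> 0) by (destruct Hr; lra).
  pose proof (nn_pos r) as Hn. pose proof (mm_pos r) as Hm.
  pose proof s3_pos as Hs.
  assert (HS : 0 < (r + 1) ^ 2) by (apply sq_pos, H2).
  replace (CF r) with (GG r 1 - GG r 0).
  { apply (FTC (GG r)).
    - intros t Ht. rewrite Rmin_left in Ht by lra. rewrite Rmax_right in Ht by lra.
      apply GG_deriv; assumption.
    - intros t Ht. rewrite Rmin_left in Ht by lra. rewrite Rmax_right in Ht by lra.
      pose proof (denom_pos (zr r) t (zr_lt r Hr) Ht) as HD.
      cont_tac. unfold gg, ww in *. auto_derive. lra. }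
  unfold GG, Lp.
  replace ((3 * r * 1 - (r + 1) ^ 2) ^ 2) with (mm r * mm r) by (unfold mm; ring).
  replace ((3 * r * 0 - (r + 1) ^ 2) ^ 2) with ((r + 1) ^ 2 * (r + 1) ^ 2) by ring.
  replace (Q2 r 1) with ((r + 1) ^ 2 * mm r) by (unfold Q2, mm; ring).
  replace (Q2 r 0) with (mm r * mm r) by (unfold Q2; ring).
  replace (Yt r 1) with (Y1 r) by (unfold Yt, Y1; field; split; nz).
  replace (Yt r 0) with (Y0 r) by (unfold Yt, Y0; field; split; nz).
  rewrite !ln_mult by lra.
  pose proof (triple r Hr) as T.
  unfold CF.
  replace ((r ^ 3 + 1) / (r + 1) ^ 3) with (mm r * / ((r + 1) ^ 2)) by (unfold mm; field; exact H2).
  rewrite ln_mult, ln_Rinv by (try apply Rinv_0_lt_compat; lra).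
  change (sqrt 3 / (2 * r - 1)) with (sqrt 3 * V0 r).
  assert (HK : Kc r = r / (r ^ 3 - 1) * (2 * sqrt 3 * (r + 1)) / 3).
  { unfold Kc.
    replace (2 * r * (r + 1) / (sqrt 3 * (r - 1) * nn r)) with
      (2 * r * (r + 1) * (sqrt 3 * sqrt 3) / (3 * sqrt 3 * (r - 1) * nn r)) by (rewrite s3; field; split; lra).
    unfold nn. field. repeat split; try lra. unfold nn in Hn; lra. }
  rewrite HK.
  set (A1 := atan (sqrt 3 * Y1 r)) in *.
  set (A0 := atan (sqrt 3 * Y0 r)) in *.
  set (AV := atan (sqrt 3 * V0 r)) in *.
  replace A1 with (A0 + 3 * AV) by lra.
  unfold mm, nn in *. field. repeat split; lra.
Qed.

Lemma cbrt_cube t : cbrt t ^ 3 = t.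
Proof.
  unfold cbrt. destruct (Rlt_dec 0 t) as [H|H].
  - replace 3%nat with 3%nat by reflexivity.
    rewrite <- (Rpower_pow 3 (Rpower t (1/3))) by (unfold Rpower; apply exp_pos).
    rewrite Rpower_mult. replace (1 / 3 * INR 3) with 1 by (simpl; field).
    apply Rpower_1, H.
  - destruct (Rlt_dec t 0) as [H'|H'].
    + replace ((- Rpower (- t) (1 / 3)) ^ 3) with (- (Rpower (- t) (1 / 3)) ^ 3) by ring.
      rewrite <- (Rpower_pow 3 (Rpower (- t) (1/3))) by (unfold Rpower; apply exp_pos).
      rewrite Rpower_mult. replace (1 / 3 * INR 3) with 1 by (simpl; field).
      rewrite Rpower_1 by lra. ring.
    + assert (t = 0) by lra. subst. ring.
Qed.

Lemma cube_inj a b : a ^ 3 = b ^ 3 -> a = b.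
Proof.
  intros H. destruct (Req_dec a b) as [E|E]; [exact E|exfalso].
  assert (H2 : (a - b) * (a ^ 2 + a * b + b ^ 2) = 0).
  { replace ((a - b) * (a ^ 2 + a * b + b ^ 2)) with (a ^ 3 - b ^ 3) by ring. lra. }
  apply Rmult_integral in H2. destruct H2 as [H2|H2]; [apply E; lra|].
  pose proof (pow2_ge_0 (2 * a + b)). pose proof (pow2_ge_0 b).
  assert (Hb2 : b * b = 0) by nra. apply Rmult_integral in Hb2.
  assert (b = 0) by (destruct Hb2; lra). subst b.
  assert (Ha2 : a * a = 0) by nra. apply Rmult_integral in Ha2. apply E; destruct Ha2; lra.
Qed.

Lemma cbrt_mult x y : cbrt (x * y) = cbrt x * cbrt y.
Proof. apply cube_inj. rewrite cbrt_cube, Rpow_mult_distr, !cbrt_cube. reflexivity. Qed.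

Theorem mainTheorem2 (x y : R) :
  y <> 0 ->
  (x / y > 1 \/ x / y <= - (sqrt 2 + 1) ^ 2) ->
  is_series (fun n : nat => term x y (S n))
    (cbrt (x * y) / (x - y) *
      (2 * sqrt 3 * (cbrt x + cbrt y) *
         atan (sqrt 3 * cbrt y / (2 * cbrt x - cbrt y))
       + (cbrt x - cbrt y) * ln ((x + y) / (cbrt x + cbrt y) ^ 3))).
Proof.
  intros Hy Hc.
  pose proof (cbrt_cube x) as Hx3. pose proof (cbrt_cube y) as Hy3.
  rewrite cbrt_mult.
  set (a := cbrt x) in *. set (b := cbrt y) in *. clearbody a b.
  subst x y.
  assert (Hb : b <> 0) by (intro; subst; apply Hy; ring).
  assert (Ha : a = (a / b) * b) by (field; exact Hb).
  set (r := a / b) in *. clearbody r. subst a.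
  replace ((r * b) ^ 3 / b ^ 3) with (r ^ 3) in Hc by (field; exact Hb).
  pose proof (sqrt_lt_R0 2 ltac:(lra)) as Hs2.
  pose proof (sqrt_sqrt 2 ltac:(lra)) as Hs22.
  assert (Hr : 1 < r \/ r < -1).
  { destruct Hc as [Hc|Hc].
    - left. destruct (Rlt_or_le 1 r) as [H|H]; [exact H|]. exfalso.
      assert (E : r ^ 3 - 1 = (r - 1) * (r ^ 2 + r + 1)) by ring.
      assert (0 < r ^ 2 + r + 1) by nra.
      assert ((r - 1) * (r ^ 2 + r + 1) <= 0) by (apply Rmult_le_0_r; lra). lra.
    - right. assert (r ^ 3 < -1) by nra.
      destruct (Rlt_or_le r (-1)) as [H'|H']; [exact H'|]. exfalso.
      assert (E : r ^ 3 + 1 = (r + 1) * (r ^ 2 - r + 1)) by ring.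
      assert (0 < r ^ 2 - r + 1) by nra.
      assert (0 <= (r + 1) * (r ^ 2 - r + 1)) by (apply Rmult_le_pos; lra). lra. }
  assert (H1 : r - 1 <> 0) by (destruct Hr; lra).
  assert (H2 : r + 1 <> 0) by (destruct Hr; lra).
  assert (H3 : 1 + r ^ 3 <> 0) by (destruct Hr; nra).
  assert (H4 : r ^ 3 - 1 <> 0) by (destruct Hr; nra).
  assert (H5 : 2 * r - 1 <> 0) by (destruct Hr; lra).
  assert (Hb3 : b ^ 3 <> 0) by (apply pow_nonzero, Hb).
  assert (F1 : 2 * (r * b) - b <> 0) by (replace (2 * (r * b) - b) with (b * (2 * r - 1)) by ring; nz).
  assert (F3 : (r * b) ^ 3 + b ^ 3 <> 0)
    by (replace ((r * b) ^ 3 + b ^ 3) with (b ^ 3 * (1 + r ^ 3)) by ring; nz).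
  assert (F2 : r * b + b <> 0) by (replace (r * b + b) with (b * (r + 1)) by ring; nz).
  replace (r * b * b / ((r * b) ^ 3 - b ^ 3) *
      (2 * sqrt 3 * (r * b + b) * atan (sqrt 3 * b / (2 * (r * b) - b)) +
       (r * b - b) * ln (((r * b) ^ 3 + b ^ 3) / (r * b + b) ^ 3))) with (CF r).
  2: { unfold CF.
       replace (sqrt 3 * b / (2 * (r * b) - b)) with (sqrt 3 / (2 * r - 1)) by (field; split; nz).
       replace (((r * b) ^ 3 + b ^ 3) / (r * b + b) ^ 3) with ((r ^ 3 + 1) / (r + 1) ^ 3) by (field; split; nz).
       field. split; [|nz]. intro Hz. apply H4. 
       assert (E : (r * b) ^ 3 - b ^ 3 = b ^ 3 * (r ^ 3 - 1)) by ring.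
       rewrite E in Hz. apply Rmult_integral in Hz. destruct Hz; [contradiction|assumption]. }
  assert (Hz : zz ((r * b) ^ 3) (b ^ 3) = zr r).
  { unfold zz, zr. field. repeat split; try assumption. }
  apply series_part.
  - exact F3.
  - rewrite Hz. split; [|apply zr_lt, Hr].
    unfold zr. 
    assert (HP : 0 < (1 + r ^ 3) ^ 2) by (apply sq_pos, H3).
    assert (HQ : - (1 + r ^ 3) ^ 2 <= 4 * r ^ 3).
    { destruct Hc as [Hc|Hc]; [nra|].
      assert (r ^ 3 + 3 <= - 2 * sqrt 2) by nra. nra. }
    apply Rmult_le_reg_r with ((1 + r ^ 3) ^ 2); [exact HP|].
    replace (27 * r ^ 3 / (1 + r ^ 3) ^ 2 * (1 + r ^ 3) ^ 2) with (27 * r ^ 3) by (field; exact H3). lra.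
  - rewrite Hz. apply closed_form, Hr.
Qed.
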